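(* Let $r\ge 2$ and let $p=p(n)$ satisfy $p=\omega(n^{-1})$ and $p=o(n^{-1/r})$. Let $U,W\subset[n]$ be sets of vertices of $G(n,p)$ with $|U|=n/(2^r r!\sqrt{e})$. Then with probability $1-\exp(-\Omega(p^{-1}))$ all but at most $p^{-1}$ vertices in $[n]\setminus(U\cup W)$ have at least $r$ neighbours in $U$.
   Context: $G(n,p)$ is the random graph on $[n]$ with each edge independently present with probability $p$; $U,W$ are fixed (not depending on the edges). Asymptotic notation refers to $n\to\infty$. *)

(* Defs.v *)
From HB Require Import structures.
From mathcomp Require Import all_boot all_order all_algebra.
From mathcomp Require Import all_classical all_reals all_analysis.
Set Implicit Arguments. Unset Strict Implicit. Unset Printing Implicit Defensive.
Import Order.TTheory GRing.Theory Num.Theory.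
Local Open Scope ring_scope.

(* Graphs on vertex set [n] = 'I_n are encoded by their edge sets: a graph is a
   set G of pairs (i,j) with i < j (each unordered edge {i,j} is stored once). *)
Definition pairs (n : nat) : {set 'I_n * 'I_n} := [set e : 'I_n * 'I_n | (e.1 < e.2)%N].

Definition adj (n : nat) (G : {set 'I_n * 'I_n}) (u v : 'I_n) : bool :=
  ((u, v) \in G) || ((v, u) \in G).

Definition Gnp_prob (R : realType) (n : nat) (p : R)
    (E : {set 'I_n * 'I_n} -> bool) : R :=
  \sum_(G : {set 'I_n * 'I_n} | (G \subset pairs n) && E G)
     p ^+ #|G| * (1 - p) ^+ (#|pairs n| - #|G|).

Definition deg_in (n : nat) (G : {set 'I_n * 'I_n}) (U : {set 'I_n}) (v : 'I_n) : nat :=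
  #|[set u in U | adj G u v]|.

Definition bad_vertices (n r : nat) (G : {set 'I_n * 'I_n}) (U W : {set 'I_n})
  : {set 'I_n} :=
  [set v | (v \notin U :|: W) && (deg_in G U v < r)%N].

(* Main.v *)
Require Import Defs.
From HB Require Import structures.
From mathcomp Require Import all_boot all_order all_algebra.
From mathcomp Require Import all_classical all_reals all_analysis.
From mathcomp Require Import ring lra.
Import Order.TTheory GRing.Theory Num.Theory.
Local Open Scope ring_scope.

Definition Wt {R : realType} {T : finType} (c : T -> bool -> R) (G : {set T}) : R :=
  \prod_e c e (e \in G).
Definition Ex {R : realType} {T : finType} (c : T -> bool -> R) (F : {set T} -> R) : R :=
  \sum_G Wt c G * F G.

Lemma Ex_prodform {R : realType} {T : finType} (c h : T -> bool -> R) :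
  Ex c (fun G => \prod_e h e (e \in G)) =
  \prod_e (c e true * h e true + c e false * h e false).
Proof.
rewrite /Ex /Wt.
transitivity (\sum_(G : {set T}) \prod_e (c e (e \in G) * h e (e \in G))).
  by apply: eq_bigr => G _; rewrite big_split.
transitivity (\prod_(e : T) \sum_(b : bool) (c e b * h e b)); last first.
  by apply: eq_bigr => e _; rewrite big_bool.
rewrite bigA_distr_bigA /=.
rewrite (reindex (fun G : {set T} => [ffun e => e \in G])) /=.
  by apply: eq_bigr => G _; apply: eq_bigr => e _; rewrite ffunE.
exists (fun f : {ffun T -> bool} => [set e | f e]).
  by move=> G _; apply/setP => e; rewrite inE ffunE.
by move=> f _; apply/ffunP => e; rewrite !ffunE inE.
Qed.

Definition WA {R : realType} {T : finType} (c : T -> bool -> R) (A G : {set T}) : R :=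
  \prod_(e in A) c e (e \in G).

Lemma WA_restr {R : realType} {T : finType} (c : T -> bool -> R) A G :
  WA c A G = WA c A (G :&: A).
Proof. by apply: eq_bigr => e eA; rewrite inE eA andbT. Qed.

Lemma sum_split {R : realType} {T : finType} (A : {set T}) (F : {set T} -> R) :
  \sum_G F G = \sum_(G1 : {set T} | G1 \subset A) \sum_(G2 : {set T} | G2 \subset ~: A) F (G1 :|: G2).
Proof.
rewrite pair_big_dep /=.
rewrite (reindex_onto (fun x : {set T} * {set T} => x.1 :|: x.2)
          (fun G => (G :&: A, G :&: ~: A))) /=; last first.
  by move=> G _; apply/setP => e; rewrite !inE; case: (e \in A); rewrite ?andbT ?andbF ?orbF.
apply: eq_bigl => [[G1 G2]] /=.
apply/eqP/andP.
  case=> e1 e2; split; [rewrite -e1 | rewrite -e2]; exact: finset.subsetIr.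
case=> s1 s2; congr pair; apply/setP => e; rewrite !inE.
  have := fintype.subsetP s1 e; have := fintype.subsetP s2 e; rewrite !inE.
  by case: (e \in A); case: (e \in G1); case: (e \in G2) => //= H1 H2;
    first [by move: (H1 isT) | by move: (H2 isT)].
have := fintype.subsetP s1 e; have := fintype.subsetP s2 e; rewrite !inE.
by case: (e \in A); case: (e \in G1); case: (e \in G2) => //= H1 H2;
    first [by move: (H1 isT) | by move: (H2 isT)].
Qed.

Lemma restr1 {T : finType} (A G1 G2 : {set T}) :
  G1 \subset A -> G2 \subset ~: A -> (G1 :|: G2) :&: A = G1.
Proof.
move=> s1 s2; apply/setP => e; rewrite !inE.
have := fintype.subsetP s1 e; have := fintype.subsetP s2 e; rewrite !inE.
by case: (e \in A); case: (e \in G1); case: (e \in G2) => //= H1 H2;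
    first [by move: (H1 isT) | by move: (H2 isT)].
Qed.

Lemma restr2 {T : finType} (A G1 G2 : {set T}) :
  G1 \subset A -> G2 \subset ~: A -> (G1 :|: G2) :&: ~: A = G2.
Proof.
move=> s1 s2; apply/setP => e; rewrite !inE.
have := fintype.subsetP s1 e; have := fintype.subsetP s2 e; rewrite !inE.
by case: (e \in A); case: (e \in G1); case: (e \in G2) => //= H1 H2;
    first [by move: (H1 isT) | by move: (H2 isT)].
Qed.

Lemma Wt_split {R : realType} {T : finType} (c : T -> bool -> R) A G :
  Wt c G = WA c A G * WA c (~: A) G.
Proof.
rewrite /Wt /WA (bigID (mem A)) /=; congr (_ * _).
by apply: eq_bigl => e; rewrite inE.
Qed.

Lemma Ex_split {R : realType} {T : finType} (c : T -> bool -> R) A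
   (f g : {set T} -> R) :
  (forall G, f G = f (G :&: A)) -> (forall G, g G = g (G :&: ~: A)) ->
  Ex c (fun G => f G * g G) =
  (\sum_(G1 : {set T} | G1 \subset A) WA c A G1 * f G1) *
  (\sum_(G2 : {set T} | G2 \subset ~: A) WA c (~: A) G2 * g G2).
Proof.
move=> fA gA; rewrite /Ex (sum_split A) mulr_suml; apply: eq_bigr => G1 s1.
rewrite mulr_sumr; apply: eq_bigr => G2 s2.
rewrite (Wt_split c A) WA_restr (WA_restr c (~: A)) fA gA restr1 // restr2 //.
by rewrite -!mulrA; congr (_ * _); rewrite mulrCA.
Qed.

Lemma Ex1 {R : realType} {T : finType} (c : T -> bool -> R) :
  (forall e, c e true + c e false = 1) -> Ex c (fun _ => 1) = 1.
Proof.
move=> hc; have H := Ex_prodform c (fun _ _ => 1).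
transitivity (\prod_(e : T) (c e true * 1 + c e false * 1)); last first.
  by rewrite big1 // => e _; rewrite !mulr1 hc.
rewrite -H /Ex; apply: eq_bigr => G _.
by rewrite big1_eq.
Qed.

Lemma Ex_indep {R : realType} {T : finType} (c : T -> bool -> R) A
   (f g : {set T} -> R) :
  (forall e, c e true + c e false = 1) ->
  (forall G, f G = f (G :&: A)) -> (forall G, g G = g (G :&: ~: A)) ->
  Ex c (fun G => f G * g G) = Ex c f * Ex c g.
Proof.
move=> hc fA gA.
have c1 : forall G : {set T}, (fun _ : {set T} => (1:R)) G = (fun _ : {set T} => (1:R)) (G :&: A) by [].
have c2 : forall G : {set T}, (fun _ : {set T} => (1:R)) G = (fun _ : {set T} => (1:R)) (G :&: ~: A) by [].
have e1 := Ex_split c A f g fA gA.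
have e2 := Ex_split c A f (fun _ => 1) fA c2.
have e3 := Ex_split c A (fun _ => 1) g c1 gA.
have e4 := Ex_split c A (fun _ => 1) (fun _ => 1) c1 c2.
set x := \sum_(G1 : {set T} | G1 \subset A) WA c A G1 * f G1 in e1 e2 *.
set y := \sum_(G2 : {set T} | G2 \subset ~: A) WA c (~: A) G2 * g G2 in e1 e3 *.
set a := \sum_(G1 : {set T} | G1 \subset A) WA c A G1 * 1 in e3 e4 *.
set b := \sum_(G2 : {set T} | G2 \subset ~: A) WA c (~: A) G2 * 1 in e2 e4 *.
have -> : Ex c f = x * b.
  by rewrite -e2 /Ex; apply: eq_bigr => G _; rewrite mulr1.
have -> : Ex c g = a * y.
  by rewrite -e3 /Ex; apply: eq_bigr => G _; rewrite mul1r.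
have H : a * b = 1.
  by rewrite -e4 -[RHS](Ex1 c hc) /Ex; apply: eq_bigr => G _; rewrite mulr1.
rewrite e1 -[x * y]mulr1 -H.
ring.
Qed.

Lemma Ex_prod_indep {R : realType} {T : finType} (c : T -> bool -> R)
  (I : eqType) (s : seq I) (A : I -> {set T}) (f : I -> {set T} -> R) :
  (forall e, c e true + c e false = 1) -> uniq s ->
  (forall i j, i \in s -> j \in s -> i != j -> [disjoint A i & A j]) ->
  (forall i G, f i G = f i (G :&: A i)) ->
  Ex c (fun G => \prod_(i <- s) f i G) = \prod_(i <- s) Ex c (f i).
Proof.
move=> hc; elim: s => [|i s IH] /=.
  move=> _ _ _; rewrite big_nil -[RHS](Ex1 c hc) /Ex.
  by under eq_bigr do rewrite big_nil.
case/andP=> nis us dis fA.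
rewrite big_cons -IH //; last first.
  by move=> j k js ks; apply: dis; rewrite inE ?js ?ks orbT.
have -> : Ex c (fun G => \prod_(j <- i :: s) f j G) =
          Ex c (fun G => f i G * \prod_(j <- s) f j G).
  by rewrite /Ex; apply: eq_bigr => G _; rewrite big_cons.
apply: (Ex_indep c (A i)) => // G.
rewrite big_seq_cond [RHS]big_seq_cond; apply: eq_bigr => j /andP[js _].
rewrite fA [in RHS]fA; congr (f j _).
have dij : [disjoint A i & A j].
  apply: dis; rewrite ?inE ?eqxx ?js ?orbT //.
  by apply/eqP => eij; move: nis; rewrite eij js.
apply/setP => e; rewrite !inE.
case ej: (e \in A j); rewrite ?andbF ?andbT //.
by rewrite (disjointFl dij ej) andbT.
Qed.

Lemma Ex_affine {R : realType} {T : finType} (c : T -> bool -> R) (a b : R) F :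
  (forall e, c e true + c e false = 1) ->
  Ex c (fun G => a + b * F G) = a + b * Ex c F.
Proof.
move=> hc; rewrite /Ex.
under eq_bigr do rewrite mulrDr.
rewrite big_split /=; congr (_ + _).
  have E1 := Ex1 c hc; rewrite /Ex in E1.
  rewrite -mulr_suml; transitivity ((\sum_G Wt c G * 1) * a).
    by congr (_ * _); apply: eq_bigr => G _; rewrite mulr1.
  by rewrite E1 mul1r.
by rewrite mulr_sumr; apply: eq_bigr => G _; rewrite mulrCA.
Qed.

Lemma Ex_scale {R : realType} {T : finType} (c : T -> bool -> R) (b : R) F :
  Ex c (fun G => b * F G) = b * Ex c F.
Proof. by rewrite /Ex mulr_sumr; apply: eq_bigr => G _; rewrite mulrCA. Qed.

Lemma Wt_ge0 {R : realType} {T : finType} (c : T -> bool -> R) G :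
  (forall e b, 0 <= c e b) -> 0 <= Wt c G.
Proof. by move=> h; apply: prodr_ge0 => e _. Qed.

Lemma Ex_le {R : realType} {T : finType} (c : T -> bool -> R) F H :
  (forall e b, 0 <= c e b) -> (forall G, F G <= H G) -> Ex c F <= Ex c H.
Proof.
move=> h FH; apply: ler_sum => G _; apply: ler_wpM2l; [exact: Wt_ge0 | exact: FH].
Qed.

Lemma Ex_ge0 {R : realType} {T : finType} (c : T -> bool -> R) F :
  (forall e b, 0 <= c e b) -> (forall G, 0 <= F G) -> 0 <= Ex c F.
Proof.
move=> h F0; apply: sumr_ge0 => G _; apply: mulr_ge0; [exact: Wt_ge0 | exact: F0].
Qed.

Lemma Ex_mem {R : realType} {T : finType} (c : T -> bool -> R) (e : T) :
  (forall e, c e true + c e false = 1) ->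
  Ex c (fun G => (e \in G)%:R) = c e true.
Proof.
move=> hc.
have := Ex_prodform c (fun e' (b : bool) => if e' == e then (b%:R : R) else 1).
rewrite (bigD1 e) //= eqxx mulr1 mulr0 addr0 big1 ?mulr1; last first.
  by move=> e' /negbTE ->; rewrite !mulr1 hc.
move=> <-; rewrite /Ex; apply: eq_bigr => G _; congr (_ * _).
by rewrite (bigD1 e) //= eqxx big1 ?mulr1 // => e' /negbTE ->.
Qed.

Definition cG {R : realType} (n : nat) (p : R) (e : 'I_n * 'I_n) (b : bool) : R :=
  if e \in pairs n then (if b then p else 1 - p) else (if b then 0 else 1).

Lemma cG_sum {R : realType} n (p : R) e : cG n p e true + cG n p e false = 1.
Proof. by rewrite /cG; case: ifP => _; rewrite ?subrKC ?add0r. Qed.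

Lemma cG_ge0 {R : realType} n (p : R) e b : 0 <= p <= 1 -> 0 <= cG n p e b.
Proof.
case/andP=> p0 p1; rewrite /cG; case: ifP => _; case: b => //; by rewrite subr_ge0.
Qed.

Lemma Gnp_Ex {R : realType} n (p : R) E :
  Gnp_prob p E = Ex (cG n p) (fun G => (E G)%:R).
Proof.
rewrite /Gnp_prob /Ex big_mkcond /=; apply: eq_bigr => G _.
case: (boolP (G \subset pairs n)) => sG /=.
  have -> : Wt (cG n p) G = p ^+ #|G| * (1 - p) ^+ (#|pairs n| - #|G|).
    rewrite /Wt (bigID (mem (pairs n))) /=.
    rewrite [X in _ * X]big1 ?mulr1; last first.
      move=> e eP; rewrite /cG (negbTE eP).
      case eG: (e \in G) => //; by move: eP; rewrite (fintype.subsetP sG e eG).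
    rewrite (bigID (mem G)) /=; congr (_ * _).
      rewrite -prodr_const; apply: eq_big => [e|e /andP[eP eG]].
        by case eG: (e \in G); rewrite ?andbT ?andbF // (fintype.subsetP sG e eG).
      by rewrite /cG eP eG.
    have -> : (#|pairs n| - #|G| = #|pairs n :\: G|)%N.
      by rewrite cardsD (finset.setIidPr sG).
    rewrite -prodr_const; apply: eq_big => [e|e /andP[eP eG]].
      by rewrite !inE andbC.
    by rewrite /cG eP (negbTE eG).
  by case: (E G); rewrite ?mulr1 ?mulr0.
have /fintype.subsetPn [e eG eP] := sG.
rewrite /Wt (bigD1 e) //= /cG (negbTE eP) eG.
by rewrite !mul0r.
Qed.

Lemma deg_real {R : realType} n (G : {set 'I_n * 'I_n}) (U : {set 'I_n}) v :
  ((deg_in G U v)%:R : R) = \sum_(u in U) ((adj G u v)%:R : R).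
Proof.
rewrite /deg_in -sum1_card natr_sum.
rewrite (eq_bigl (fun u => (u \in U) && adj G u v)); last by move=> u; rewrite inE.
by rewrite big_mkcondr /=; apply: eq_bigr => u _; case: (adj G u v).
Qed.

Definition Av {n} (U : {set 'I_n}) (v : 'I_n) : {set 'I_n * 'I_n} :=
  [set e | ((e.1 == v) && (e.2 \in U)) || ((e.2 == v) && (e.1 \in U))].

Lemma deg_local n (G : {set 'I_n * 'I_n}) U v :
  deg_in G U v = deg_in (G :&: Av U v) U v.
Proof.
rewrite /deg_in; apply: eq_card => u; rewrite !inE.
case uU: (u \in U) => //=.
rewrite /adj !inE /= eqxx uU !andbT.
by case: ((u, v) \in G); case: (u == v); case: (v \in U).
Qed.

Definition kap {R : realType} : R := 1 - expR (-1).

Lemma kap_ge0 {R : realType} : 0 <= (kap : R).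
Proof. by rewrite /kap subr_ge0 expR_le1 lerN10. Qed.

Lemma expR_bool {R : realType} (b : bool) : expR (- (b%:R : R)) = 1 + (- kap) * b%:R.
Proof. by case: b; rewrite /kap ?mulr1 ?mulr0 ?oppr0 ?expR0 ?addr0 // opprB addrC subrK. Qed.

Lemma Ex_adj {R : realType} n (p : R) (u v : 'I_n) :
  0 <= p <= 1 -> u != v ->
  p <= Ex (cG n p) (fun G => ((adj G u v)%:R : R)).
Proof.
move=> hp uv.
pose e : 'I_n * 'I_n := if (u < v)%N then (u, v) else (v, u).
have eP : e \in pairs n.
  rewrite /e inE; case: ifP => //= /negbT; rewrite -leqNgt leq_eqVlt.
  by case/orP => // /eqP/val_inj vu; move: uv; rewrite vu eqxx.
have H : Ex (cG n p) (fun G => ((e \in G)%:R : R)) = p.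
  rewrite Ex_mem; last exact: cG_sum.
  by rewrite /cG eP.
rewrite -{1}H.
apply: Ex_le => [e' b|G]; first exact: cG_ge0.
rewrite /adj /e; case: ifP => _.
  by case: ((u, v) \in G); case: ((v, u) \in G).
by case: ((u, v) \in G); case: ((v, u) \in G).
Qed.

Lemma eq_Ex {R : realType} {T : finType} (c : T -> bool -> R) (F H : {set T} -> R) :
  (forall G, F G = H G) -> Ex c F = Ex c H.
Proof. by move=> FH; rewrite /Ex; apply: eq_bigr => G _; rewrite FH. Qed.

Lemma ge1_expR {R : realType} (x : R) : 0 <= x -> 1 <= expR x.
Proof. by move=> x0; apply: le_trans (expR_ge1Dx x); rewrite lerDl. Qed.

Lemma inner_bound {R : realType} n (p : R) (r : nat) (U : {set 'I_n}) v :
  0 <= p <= 1 -> v \notin U ->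
  Ex (cG n p) (fun G => (((deg_in G U v < r)%N)%:R : R))
    <= expR (r%:R) * expR (- (kap * p * #|U|%:R)).
Proof.
move=> hp vU.
have hc := cG_sum n p.
have h0 : forall e b, 0 <= cG n p e b by move=> e b; exact: cG_ge0.
apply: le_trans (Ex_le (cG n p) _ (fun G => expR r%:R *
     \prod_(u <- enum U) expR (- ((adj G u v)%:R : R))) h0 _) _.
  move=> G; rewrite -expR_sum sumrN big_enum /= -deg_real -expRD.
  case: ltnP => H /=; last exact: expR_ge0.
  by apply: ge1_expR; rewrite subr_ge0 ler_nat ltnW.
rewrite Ex_scale ler_wpM2l ?expR_ge0 //.
rewrite (Ex_prod_indep (cG n p) _ (enum U) (fun u => [set (u, v); (v, u)])
   (fun u G => expR (- ((adj G u v)%:R : R)))) //.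
- rewrite big_enum /=.
  have -> : expR (- (kap * p * #|U|%:R)) = \prod_(u in U) expR (- (kap * p)).
    by rewrite prodr_const -expRM_natr mulNr.
  apply: ler_prod => u uU; apply/andP; split.
      by apply: Ex_ge0 => // G; exact: expR_ge0.
    under eq_Ex do rewrite expR_bool.
    rewrite Ex_affine // mulNr.
    apply: le_trans (expR_ge1Dx _); rewrite lerD2l lerN2.
    apply: ler_wpM2l; first exact: kap_ge0.
    apply: Ex_adj => //; apply: contraNneq vU => <-; exact: uU.
- exact: enum_uniq.
- move=> i j; rewrite !mem_enum => iU jU ij.
  have iv : (i == v) = false by apply/negbTE; apply: contraNneq vU => <-.
  have jv : (j == v) = false by apply/negbTE; apply: contraNneq vU => <-.
  have vi : (v == i) = false by rewrite eq_sym.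
  have vj : (v == j) = false by rewrite eq_sym.
  rewrite disjoint_subset; apply/fintype.subsetP => e; rewrite !inE.
  by case/orP => /eqP ->; rewrite !xpair_eqE ?iv ?jv ?vi ?vj ?eqxx ?(negbTE ij) /= ?andbF ?andbT.
- move=> u G; rewrite /adj !inE !eqxx /=.
  by rewrite andbT orbT andbT.
Qed.

Lemma bad_real {R : realType} n r (G : {set 'I_n * 'I_n}) (U W : {set 'I_n}) :
  ((#|bad_vertices r G U W|)%:R : R) =
  \sum_(v in ~: (U :|: W)) (((deg_in G U v < r)%N)%:R : R).
Proof.
rewrite /bad_vertices -sum1_card natr_sum.
rewrite (eq_bigl (fun v => (v \in ~: (U :|: W)) && (deg_in G U v < r)%N));
  last by move=> v; rewrite !inE.
by rewrite big_mkcondr /=; apply: eq_bigr => v _; case: (deg_in G U v < r)%N.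
Qed.

Lemma Av_disj n (U : {set 'I_n}) v w :
  v \notin U -> w \notin U -> v != w -> [disjoint Av U v & Av U w].
Proof.
move=> vU wU vw.
rewrite disjoint_subset; apply/fintype.subsetP => [[a b]]; rewrite !inE /=.
case/orP => /andP [/eqP -> bU].
  apply/negP; case/orP => /andP [/eqP wv H].
    by move: vw; rewrite wv eqxx.
  by move: wU; rewrite -wv bU.
apply/negP; case/orP => /andP [/eqP wv H].
  by move: wU; rewrite -wv bU.
by move: vw; rewrite wv eqxx.
Qed.

Lemma expR_bool2 {R : realType} (b : bool) :
  expR ((b%:R : R)) = 1 + (expR 1 - 1) * b%:R.
Proof. by case: b; rewrite ?mulr1 ?mulr0 ?expR0 ?addr0 // addrC subrK. Qed.

Lemma outer_bound {R : realType} n (p : R) r (U W : {set 'I_n}) :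
  0 < p <= 1 ->
  Gnp_prob p (fun G => ~~ (#|bad_vertices r G U W|%:R <= p^-1))
   <= expR ((expR 1 - 1) * (expR r%:R * expR (- (kap * p * #|U|%:R))) * n%:R
            - p^-1).
Proof.
case/andP=> p0 p1; have hp : 0 <= p <= 1 by rewrite ltW.
have hc := cG_sum n p.
have h0 : forall e b, 0 <= cG n p e b by move=> e b; exact: cG_ge0.
have e1 : 0 <= expR 1 - 1 :> R by rewrite subr_ge0 ge1_expR.
set q := expR r%:R * expR (- (kap * p * #|U|%:R)).
have q0 : 0 <= q by rewrite mulr_ge0 ?expR_ge0.
rewrite Gnp_Ex.
apply: le_trans (Ex_le (cG n p) _ (fun G => expR (- p^-1) *
     \prod_(v <- enum (~: (U :|: W))) expR (((deg_in G U v < r)%N)%:R : R)) h0 _) _.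
  move=> G; rewrite -expR_sum big_enum /= -bad_real -expRD.
  case: (boolP (#|bad_vertices r G U W|%:R <= p^-1)) => H /=; first exact: expR_ge0.
  by apply: ge1_expR; rewrite addrC subr_ge0 ltW // ltNge.
rewrite Ex_scale.
rewrite (Ex_prod_indep (cG n p) _ (enum (~: (U :|: W))) (fun v => Av U v)
   (fun v G => expR (((deg_in G U v < r)%N)%:R : R))) //.
- rewrite big_enum /=.
  apply: (@le_trans _ _ (expR (- p^-1) * \prod_(v in ~: (U :|: W)) expR ((expR 1 - 1) * q))).
    rewrite ler_wpM2l ?expR_ge0 //.
    apply: ler_prod => v; rewrite !inE negb_or => /andP[vU _]; apply/andP; split.
      by apply: Ex_ge0 => // G; exact: expR_ge0.
    under eq_Ex do rewrite expR_bool2.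
    rewrite Ex_affine //.
    apply: le_trans (expR_ge1Dx _); rewrite lerD2l ler_wpM2l //.
    exact: inner_bound.
  rewrite prodr_const -expRM_natr -expRD addrC ler_expR lerD2r.
  rewrite ler_wpM2l ?mulr_ge0 // ler_nat.
  by apply: leq_trans (max_card _) _; rewrite card_ord.
- exact: enum_uniq.
- move=> i j; rewrite !mem_enum !inE !negb_or => /andP[iU _] /andP[jU _] ij.
  exact: Av_disj.
- by move=> v G; rewrite -deg_local.
Qed.

Lemma floor_card {R : realType} (y : R) : 0 <= y ->
  y - 1 <= ((`|Num.floor y|%N)%:R : R).
Proof.
move=> y0; rewrite natr_absz ger0_norm ?floor_ge0 //.
have := floorD1_gt y; rewrite intrD => H; lra.
Qed.

Lemma xexp {R : realType} (a x : R) : 0 < a -> 0 < x ->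
  x * expR (- (a * x)) <= 4 / (a ^+ 2 * x).
Proof.
move=> a0 x0; have ax0 : 0 < a * x by rewrite mulr_gt0.
have E : (a * x) ^+ 2 <= 4 * expR (a * x).
  have -> : a * x = (a * x / 2) * 2%:R by rewrite -mulrA mulVf ?mulr1 // pnatr_eq0.
  rewrite expRM_natr.
  have h1 : a * x / 2 <= expR (a * x / 2).
    by apply: le_trans (expR_ge1Dx _); rewrite lerDr.
  have h0 : 0 <= a * x / 2 by rewrite divr_ge0 // ltW.
  have h2 : (a * x / 2) ^+ 2 <= expR (a * x / 2) ^+ 2.
    by rewrite lerXn2r // ?nnegrE // expR_ge0.
  rewrite exprMn -natrX /=.
  move: h2; set y := expR (a * x / 2) ^+ 2; set z := (a * x / 2) ^+ 2 => h2.
  have -> : ((2 ^ 2)%:R : R) = 4 by [].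
  lra.
rewrite expRN ler_pdivlMr ?mulr_gt0 ?exprn_gt0 //.
have -> : x / expR (a * x) * (a ^+ 2 * x) = (a * x) ^+ 2 / expR (a * x).
  by rewrite exprMn !expr2; ring.
by rewrite ler_pdivrMr ?expR_gt0 // mulrC.
Qed.

Lemma key {R : realType} (n r : nat) (p m alpha : R) :
  0 < p <= 1 -> 0 < alpha -> alpha * n%:R - 1 <= m ->
  8 * ((expR 1 - 1) * expR r%:R) * expR kap / (kap * alpha) ^+ 2 <= n%:R * p ->
  (expR 1 - 1) * (expR r%:R * expR (- (kap * p * m))) * n%:R - p^-1
    <= - ((1/2) / p).
Proof.
move=> /andP[p0 p1] al0 hm hx.
have kap0 : 0 < (kap : R) by rewrite /kap subr_gt0 expR_lt1 ltrN10.
have e0 : 0 < expR 1 - 1 :> R.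
  by have := expR_ge1Dx (1 : R); rewrite subr_gt0 => H; lra.
set C := (expR 1 - 1) * expR r%:R in hx *.
set a := kap * alpha in hx *.
set x := n%:R * p in hx *.
have C0 : 0 < C by rewrite mulr_gt0 ?expR_gt0.
have a0 : 0 < a by rewrite mulr_gt0.
have thr0 : 0 < 8 * C * expR kap / a ^+ 2.
  by rewrite divr_gt0 ?exprn_gt0 // !mulr_gt0 ?expR_gt0.
have x0 : 0 < x by apply: lt_le_trans hx.
set E := expR (- (kap * p * m)).
have E1 : E <= expR kap * expR (- (a * x)).
  rewrite /E -expRD ler_expR.
  have h1 : p * (alpha * n%:R - 1) <= p * m by rewrite ler_wpM2l // ltW.
  have h2 : kap * (p * (alpha * n%:R - 1)) <= kap * (p * m).
    by rewrite ler_wpM2l // ltW.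
  have h3 : kap * p <= kap by rewrite -[X in _ <= X]mulr1 ler_wpM2l // ltW.
  have eq1 : kap * (p * (alpha * n%:R - 1)) = a * x - kap * p by rewrite /a /x; ring.
  have eq2 : kap * (p * m) = kap * p * m by ring.
  lra.
have E2 := xexp a x a0 x0.
have T1 : C * (E * x) <= 1 / 2.
  have s1 : E * x <= expR kap * (x * expR (- (a * x))).
    have -> : expR kap * (x * expR (- (a * x))) = expR kap * expR (- (a * x)) * x
      by ring.
    by rewrite ler_wpM2r // ltW.
  have s2 : expR kap * (x * expR (- (a * x))) <= expR kap * (4 / (a ^+ 2 * x)).
    by rewrite ler_wpM2l ?expR_ge0.
  have s3 : C * (expR kap * (4 / (a ^+ 2 * x))) <= 1 / 2.
    move: hx; rewrite ler_pdivrMr ?exprn_gt0 // => hx.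
    have -> : C * (expR kap * (4 / (a ^+ 2 * x))) = (8 * C * expR kap) / (a ^+ 2 * x) / 2.
      by field; rewrite !gt_eqF.
    have ax : 0 < a ^+ 2 * x by rewrite mulr_gt0 // exprn_gt0.
    rewrite ler_pdivrMr // ler_pdivrMr //.
    by have -> : 1 / 2 * 2 * (a ^+ 2 * x) = x * a ^+ 2 by field.
  have : C * (E * x) <= C * (expR kap * (4 / (a ^+ 2 * x))).
    by rewrite ler_wpM2l ?(ltW C0) //; apply: le_trans s1 s2.
  by move=> H; apply: le_trans H s3.
have T2 : (expR 1 - 1) * (expR r%:R * E) * n%:R <= (1 / 2) / p.
  rewrite ler_pdivlMr //.
  have -> : (expR 1 - 1) * (expR r%:R * E) * n%:R * p = C * (E * x)
    by rewrite /C /x; ring.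
  exact: T1.
have -> : (1 / 2) / p = p^-1 / 2 by rewrite mulrC mul1r.
lra.
Qed.

Local Open Scope classical_set_scope.
Local Open Scope ring_scope.

Theorem lemma6 (R : realType) (r : nat) (p : nat -> R)
  (U W : forall n : nat, {set 'I_n}) :
  (2 <= r)%N ->
  (forall n, 0 <= p n <= 1) ->
  (* p = omega(n^{-1}) *)
  (fun n => n%:R * p n) @ \oo --> +oo ->
  (* p = o(n^{-1/r}) *)
  (fun n => (n%:R `^ (r%:R^-1)) * p n) @ \oo --> 0 ->
  (* |U| = n / (2^r r! sqrt e), up to rounding down *)
  (forall n, #|U n| = `| Num.floor (n%:R / (2 ^+ r * r`!%:R * Num.sqrt (expR (1 : R)))) |%N) ->
  exists c : R, 0 < c /\
    \forall n \near \oo,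
      Gnp_prob (p n) (fun G => ~~ (#|bad_vertices r G (U n) (W n)|%:R <= (p n)^-1))
        <= expR (- (c / p n)).
Proof.
move=> r2 hp Hinf _ HU.
exists (1 / 2); split; first by rewrite divr_gt0.
set D := 2 ^+ r * r`!%:R * Num.sqrt (expR (1 : R)) in HU.
have D0 : 0 < D.
  by rewrite !mulr_gt0 ?exprn_gt0 ?ltr0n ?fact_gt0 ?sqrtr_gt0 ?expR_gt0.
set alpha := D^-1.
have al0 : 0 < alpha by rewrite invr_gt0.
set M := 8 * ((expR 1 - 1) * expR r%:R) * expR kap / (kap * alpha) ^+ 2.
have kap0 : 0 < (kap : R) by rewrite /kap subr_gt0 expR_lt1 ltrN10.
have e0 : 0 < expR 1 - 1 :> R.
  by have := expR_ge1Dx (1 : R); rewrite subr_gt0 => H; lra.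
have M0 : 0 < M.
  by rewrite divr_gt0 ?exprn_gt0 ?mulr_gt0 ?expR_gt0.
have HM := proj1 (cvgryPge _) Hinf M.
near=> n.
have hMn : M <= n%:R * p n by near: n; exact: HM.
have pn0 : 0 < p n.
  case: (ltP 0 (p n)) => // H.
  have := mulr_ge0_le0 (ler0n _ n) H; lra.
have hpn : 0 < p n <= 1 by rewrite pn0; case/andP: (hp n).
apply: le_trans (outer_bound n (p n) r (U n) (W n) hpn) _.
rewrite ler_expR.
apply: (key n r (p n) _ alpha) => //.
rewrite HU mulrC; apply: floor_card.
by rewrite divr_ge0 // ltW.
Unshelve. all: end_near.
Qed.
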